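(* Let $\vdash$ be the logic determined by a finite set $\mathsf{M}$ of finite matrices. (1) $\vdash$ is protoalgebraic if and only if there is a set of formulas $\Delta(x,y)$ in the variables $x,y$ such that $\emptyset\vdash\Delta(x,x)$ and $x,\Delta(x,y)\vdash y$. (2) $\vdash$ is equivalential if and only if there is a set of formulas $\Delta(x,y)$ satisfying the conditions in (1) and such that for every basic $n$-ary operation $f$, $\Delta(x_1,y_1)\cup\dots\cup\Delta(x_n,y_n)\vdash\Delta(f(x_1,\dots,x_n),f(y_1,\dots,y_n))$. Moreover, in this case, for every model $\langle\mathbf{A},F\rangle$ of $\vdash$ and $a,b\in A$: $\langle a,b\rangle\in\Omega^{\mathbf{A}}F$ iff $\Delta(a,b)\subseteq F$. (3) $\vdash$ is weakly algebraizable (resp. algebraizable) if and only if it is protoalgebraic (resp. equivalential) and there is a set of equations $\tau(x)$ such that for all $\langle\mathbf{B},F\rangle\in\mathbb{S}(\mathsf{M})$ and $b\in B$: $b\in F$ iff $\mathbf{B}/\Omega^{\mathbf{B}}F\vDash\tau(b/\Omega^{\mathbf{B}}F)$.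
   Context: A (logical) matrix is a pair $\langle \mathbf{A}, F\rangle$ with $\mathbf{A}$ an algebra and $F\subseteq A$. The Leibniz congruence $\Omega^{\mathbf{A}}F$ is the largest congruence of $\mathbf{A}$ for which $F$ is a union of blocks; a matrix is reduced if it is the identity. A logic is a substitution-invariant closure relation on formulas of a fixed algebraic language; a class $\mathsf{M}$ of matrices determines $\vdash_{\mathsf{M}}$: $\Gamma\vdash_{\mathsf{M}}\varphi$ iff for every $\langle\mathbf{A},F\rangle\in\mathsf{M}$ and every evaluation $f$ into $\mathbf{A}$, $f[\Gamma]\subseteq F$ implies $f(\varphi)\in F$. A model of $\vdash$ is a matrix $\langle\mathbf{A},F\rangle$ with $\vdash\subseteq\vdash_{\langle\mathbf{A},F\rangle}$; $\mathrm{Mod}^{*}(\vdash)$ is the class of reduced models. $\mathbb{S}(\mathsf{M})$ is the class of submatrices $\langle\mathbf{B},F\cap B\rangle$ with $\mathbf{B}$ a subalgebra of $\mathbf{A}$ and $\langle\mathbf{A},F\rangle\in\mathsf{M}$. $\vdash$ is protoalgebraic if there is a set of formulas $\Delta(x,y,\vec z)$ such that for every model $\langle\mathbf{A},F\rangle$ and $a,b\in A$: $\langle a,b\rangle\in\Omega^{\mathbf{A}}F$ iff $\Delta(a,b,\vec c)\subseteq F$ for all $\vec c\in A$; equivalential if such $\Delta$ exists without parameters $\vec z$. $\vdash$ is truth-equational if there is a set of equations $\tau(x)$ with $F=\{a:\mathbf{A}\vDash\tau(a)\}$ for every $\langle\mathbf{A},F\rangle\in\mathrm{Mod}^{*}(\vdash)$.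 Algebraizable = equivalential and truth-equational; weakly algebraizable = protoalgebraic and truth-equational. *)

(* Defs.v *)
From Stdlib Require List.
From Stdlib Require Import IndefiniteDescription.
From mathcomp Require Import all_boot.

Set Implicit Arguments.
Unset Strict Implicit.
Unset Printing Implicit Defensive.

Section AAL.

Variable Op : Type.
Variable ar : Op -> nat.

(* Formulas: variables are indexed by nat (x = 0, y = 1). *)
Inductive term : Type :=
| Var : nat -> term
| App : forall f : Op, ('I_(ar f) -> term) -> term.
Arguments App f args : clear implicits.

Fixpoint vars_in (P : nat -> Prop) (t : term) : Prop :=
  match t with
  | Var n => P n
  | App f args => forall i, vars_in P (args i)
  end.

Fixpoint subst (s : nat -> term) (t : term) : term :=
  match t with
  | Var n => s n
  | App f args => App f (fun i => subst s (args i))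
  end.

Record algebra : Type := Algebra {
  carrier :> Type;
  op : forall f : Op, ('I_(ar f) -> carrier) -> carrier }.
Arguments op a f _ : clear implicits.

Fixpoint eval (A : algebra) (v : nat -> A) (t : term) : A :=
  match t with
  | Var n => v n
  | App f args => op A f (fun i => eval v (args i))
  end.

Record matrix : Type := Matrix { malg : algebra; mfil : malg -> Prop }.
Arguments mfil : clear implicits.

Definition finite_type (T : Type) : Prop := exists s : list T, forall x, List.In x s.

Definition logic := (term -> Prop) -> term -> Prop.

Definition mat_cons (A : algebra) (F : A -> Prop) : logic :=
  fun Gamma phi => forall v : nat -> A,
    (forall g, Gamma g -> F (eval v g)) -> F (eval v phi).

Definition cons_of (M : list matrix) : logic :=
  fun Gamma phi => forall m, List.In m M -> mat_cons (mfil m) Gamma phi.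

Definition model (L : logic) (A : algebra) (F : A -> Prop) : Prop :=
  forall Gamma phi, L Gamma phi -> mat_cons F Gamma phi.

Definition is_congruence (A : algebra) (th : A -> A -> Prop) : Prop :=
  [/\ (forall a, th a a), (forall a b, th a b -> th b a),
      (forall a b c, th a b -> th b c -> th a c) &
      (forall f (u w : 'I_(ar f) -> A), (forall i, th (u i) (w i)) ->
          th (op A f u) (op A f w))].

Definition compatible (A : algebra) (th : A -> A -> Prop) (F : A -> Prop) :=
  forall a b, th a b -> F a -> F b.

(* Leibniz congruence: the largest congruence compatible with F,
   i.e. the union of all compatible congruences. *)
Definition Leibniz (A : algebra) (F : A -> Prop) : A -> A -> Prop :=
  fun a b => exists th, [/\ is_congruence th, compatible th F & th a b].

Definition reduced (A : algebra) (F : A -> Prop) : Prop :=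
  forall a b, Leibniz F a b -> a = b.

Definition xy_var (n : nat) : Prop := n = 0 \/ n = 1.

(* evaluation x |-> a, y |-> b (other variables |-> b; irrelevant for
   formulas in x, y only) *)
Definition val2 (A : algebra) (a b : A) : nat -> A :=
  fun n => if n == 0 then a else b.

Definition protoalgebraic (L : logic) : Prop :=
  exists Delta : term -> Prop,
    forall (A : algebra) (F : A -> Prop), model L F ->
    forall a b : A, Leibniz F a b <->
      (forall v : nat -> A, v 0 = a -> v 1 = b ->
         forall d, Delta d -> F (eval v d)).

Definition equivalential (L : logic) : Prop :=
  exists Delta : term -> Prop,
    (forall d, Delta d -> vars_in xy_var d) /\
    forall (A : algebra) (F : A -> Prop), model L F ->
    forall a b : A, Leibniz F a b <->
      (forall d, Delta d -> F (eval (val2 a b) d)).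

(* equations are pairs of formulas; tau(x) = equations in the variable x *)
Definition eqs_in_x (tau : term * term -> Prop) : Prop :=
  forall e, tau e -> vars_in (fun n => n = 0) e.1 /\ vars_in (fun n => n = 0) e.2.

Definition sat_eqs (A : algebra) (tau : term * term -> Prop) (a : A) : Prop :=
  forall e, tau e -> eval (fun _ => a) e.1 = eval (fun _ => a) e.2.
Arguments sat_eqs : clear implicits.

Definition truth_equational (L : logic) : Prop :=
  exists tau : term * term -> Prop, eqs_in_x tau /\
    forall (A : algebra) (F : A -> Prop), model L F -> reduced F ->
    forall a : A, F a <-> sat_eqs A tau a.

Definition algebraizable (L : logic) : Prop :=
  equivalential L /\ truth_equational L.

Definition weakly_algebraizable (L : logic) : Prop :=
  protoalgebraic L /\ truth_equational L.

Definition op_closed (A : algebra) (S : A -> Prop) : Prop :=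
  forall f (u : 'I_(ar f) -> A), (forall i, S (u i)) -> S (op A f u).

Definition sub_carrier (A : algebra) (S : A -> Prop) := {a : A | S a}.

Definition sub_op (A : algebra) (S : A -> Prop) (hS : op_closed S) (f : Op)
  (u : 'I_(ar f) -> sub_carrier S) : sub_carrier S :=
  exist _ (op A f (fun i => proj1_sig (u i))) (hS f _ (fun i => proj2_sig (u i))).

Definition sub_alg (A : algebra) (S : A -> Prop) (hS : op_closed S) : algebra :=
  @Algebra (sub_carrier S) (sub_op hS).

(* Quotient algebra A / th (meaningful when th is a congruence):
   elements are the classes th a; operations act on representatives. *)
Definition quot_carrier (A : algebra) (th : A -> A -> Prop) :=
  {P : A -> Prop | exists a, P = th a}.

Definition qclass (A : algebra) (th : A -> A -> Prop) (a : A) : quot_carrier th :=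
  exist _ (th a) (ex_intro _ a erefl).

Definition qrep (A : algebra) (th : A -> A -> Prop) (c : quot_carrier th) : A :=
  proj1_sig (constructive_indefinite_description _ (proj2_sig c)).

Definition quot_op (A : algebra) (th : A -> A -> Prop) (f : Op)
  (u : 'I_(ar f) -> quot_carrier th) : quot_carrier th :=
  qclass th (op A f (fun i => qrep (u i))).

Definition quot_alg (A : algebra) (th : A -> A -> Prop) : algebra :=
  @Algebra (quot_carrier th) (quot_op (th := th)).

(* Delta(x,x): y := x *)
Definition s_xx (n : nat) : term := if n == 1 then Var 0 else Var n.
(* Delta(x_i, y_i) with x_i = 2i, y_i = 2i+1 *)
Definition s_i (i : nat) (n : nat) : term :=
  if n == 0 then Var (2 * i) else if n == 1 then Var (2 * i + 1) else Var n.
(* Delta(f(x_1..x_n), f(y_1..y_n)) *)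
Definition s_f (f : Op) (n : nat) : term :=
  if n == 0 then App f (fun i : 'I_(ar f) => Var (2 * i))
  else if n == 1 then App f (fun i : 'I_(ar f) => Var (2 * i + 1)) else Var n.

Definition cond1 (L : logic) (Delta : term -> Prop) : Prop :=
  [/\ (forall d, Delta d -> vars_in xy_var d),
      (forall d, Delta d -> L (fun _ => False) (subst s_xx d)) &
      L (fun phi => phi = Var 0 \/ Delta phi) (Var 1)].

Definition cond2 (L : logic) (Delta : term -> Prop) : Prop :=
  cond1 L Delta /\
  forall f : Op,
    let prem := fun phi => exists (i : 'I_(ar f)) d, Delta d /\ phi = subst (s_i i) d in
    forall d, Delta d -> L prem (subst (s_f f) d).

Definition cond3 (M : list matrix) (tau : term * term -> Prop) : Prop :=
  eqs_in_x tau /\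
  forall m, List.In m M ->
  forall (S : malg m -> Prop) (hS : op_closed S) (b : sub_alg hS),
    let FB := fun c : sub_alg hS => mfil m (proj1_sig c) in
    FB b <-> sat_eqs (quot_alg (Leibniz FB)) tau (qclass (Leibniz FB) b).

End AAL.

(* Main.v *)
Require Import Defs.
From mathcomp Require Import all_boot zify.
From Stdlib Require Import FunctionalExtensionality PropExtensionality ProofIrrelevance IndefiniteDescription.

Set Implicit Arguments.
Unset Strict Implicit.
Unset Printing Implicit Defensive.

Section Gen.
Variable Op : Type.
Variable ar : Op -> nat.

Lemma eval_subst (A : algebra ar) (v : nat -> A) s t :
  eval v (subst s t) = eval (fun n => eval v (s n)) t.
Proof.
elim: t => [n|f args IH] //=. f_equal. apply: functional_extensionality => i; apply: IH.
Qed.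

Lemma eval_ext (A : algebra ar) (v w : nat -> A) t :
  (forall n, v n = w n) -> eval v t = eval w t.
Proof. by move=> H; rewrite (functional_extensionality _ _ H). Qed.

Lemma eval_vars P (A : algebra ar) (v w : nat -> A) t :
  vars_in P t -> (forall n, P n -> v n = w n) -> eval v t = eval w t.
Proof.
move=> Ht H; elim: t Ht => [n|f args IH] /= Ht; first by apply: H.
f_equal; apply: functional_extensionality => i; apply: IH; apply: Ht.
Qed.

Lemma eval_xy (A : algebra ar) (v w : nat -> A) t :
  vars_in xy_var t -> v 0 = w 0 -> v 1 = w 1 -> eval v t = eval w t.
Proof. move=> Ht h0 h1; apply: (eval_vars Ht) => n [->|->] //. Qed.

Lemma vars_subst P Q s (t : term ar) :
  vars_in P t -> (forall n, P n -> vars_in Q (s n)) -> vars_in Q (subst s t).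
Proof.
move=> Ht H; elim: t Ht => [n|f args IH] /= Ht; first by apply: H.
move=> i; apply: IH; apply: Ht.
Qed.

Definition op_compat (A : algebra ar) (th : A -> A -> Prop) :=
  forall f (u w : 'I_(ar f) -> A), (forall i, th (u i) (w i)) -> th (@op _ ar A f u) (@op _ ar A f w).

Lemma compat_eval (A : algebra ar) (th : A -> A -> Prop) : op_compat th ->
  forall v w, (forall n, th (v n) (w n)) -> forall t, th (eval v t) (eval w t).
Proof.
move=> Hc v w Hvw; elim => [n|f args IH] /=; first by apply: Hvw.
by apply: Hc.
Qed.

Lemma cong_eval (A : algebra ar) (th : A -> A -> Prop) : is_congruence th ->
  forall v w, (forall n, th (v n) (w n)) -> forall t, th (eval v t) (eval w t).
Proof. by case=> _ _ _ Hc; apply: compat_eval. Qed.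

Definition upd_o (n : nat) (T : Type) (u : 'I_n -> T) (i : 'I_n) (c : T) :=
  fun j => if j == i then c else u j.

Lemma multi_compat (A : algebra ar) (R : A -> A -> Prop) :
  (forall a, R a a) -> (forall a b c, R a b -> R b c -> R a c) ->
  (forall f u i c d, R c d -> R (@op _ ar A f (@upd_o (ar f) A u i c)) (@op _ ar A f (upd_o u i d))) ->
  op_compat R.
Proof.
move=> Rr Rt Ru f u w Huw.
have key : forall k, k <= ar f -> R (@op _ ar A f u) (@op _ ar A f (fun j : 'I_(ar f) => if j < k then w j else u j)).
  elim=> [|k IH] Hk.
    have -> : (fun j : 'I_(ar f) => if j < 0 then w j else u j) = u by apply: functional_extensionality.
    by apply: Rr.
  have Hk' : k < ar f by [].
  apply: (Rt _ _ _ (IH (ltnW Hk))).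
  set i := Ordinal Hk'.
  have E1 : (fun j : 'I_(ar f) => if j < k then w j else u j) =
            upd_o (fun j : 'I_(ar f) => if j < k then w j else u j) i (u i).
    apply: functional_extensionality => j; rewrite /upd_o.
    case: eqP => [->|] //=; by rewrite ltnn.
  have E2 : (fun j : 'I_(ar f) => if j < k.+1 then w j else u j) =
            upd_o (fun j : 'I_(ar f) => if j < k then w j else u j) i (w i).
    apply: functional_extensionality => j; rewrite /upd_o.
    case: eqP => [->|Hne] //=; first by rewrite ltnSn.
    rewrite ltnS leq_eqVlt.
    have -> : (nat_of_ord j == k) = false.
      apply/negP => /eqP Hj; apply: Hne; apply: val_inj => /=; exact Hj.
    by [].
  rewrite E2 {1}E1; apply: Ru; apply: Huw.
have := key (ar f) (leqnn _).
have -> : (fun j : 'I_(ar f) => if j < ar f then w j else u j) = w.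
  by apply: functional_extensionality => j; rewrite ltn_ord.
by [].
Qed.

Definition upd0 (T : Type) (v : nat -> T) (z : T) : nat -> T :=
  fun n => if n == 0 then z else v n.

Definition poly (A : algebra ar) (p : A -> A) :=
  exists (phi : term ar) (v : nat -> A), forall z, p z = eval (upd0 v z) phi.

Lemma poly_id (A : algebra ar) (a : A) : poly (A:=A) (fun z => z).
Proof. by exists (Var ar 0), (fun _ => a). Qed.

Lemma poly_d (A : algebra ar) (d : term ar) (k : A) : poly (A:=A) (fun z => eval (val2 z k) d).
Proof. by exists d, (fun _ => k). Qed.

Lemma poly_comp (A : algebra ar) (p q : A -> A) : poly (A:=A) p -> poly q -> poly (fun z => p (q z)).
Proof.
move=> [phi [v Hp]] [psi [w Hq]].
pose psi' := subst (fun k => Var ar k.*2) psi.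
exists (subst (fun n => if n == 0 then psi' else Var ar n.*2.+1) phi).
exists (fun n => if odd n then v n./2 else w n./2).
move=> z; rewrite Hp eval_subst; apply: eval_ext => n.
rewrite /upd0; case: n => [|n] /=.
  rewrite /psi' eval_subst Hq; apply: eval_ext => k /=.
  case: k => [|k] //=.
  by rewrite odd_double /= doubleK.
by rewrite odd_double /= uphalf_double.
Qed.

Lemma poly_step (A : algebra ar) f (u : 'I_(ar f) -> A) (i : 'I_(ar f)) :
  poly (fun z => @op _ ar A f (upd_o u i z)).
Proof.
exists (App (fun j : 'I_(ar f) => if j == i then Var ar 0 else Var ar j.+1)).
exists (fun n => u (insubd i n.-1)).
move=> z /=; f_equal; apply: functional_extensionality => j.
rewrite /upd_o; case: (j == i) => //=.
congr (u _); apply: val_inj; rewrite /= val_insubd ltn_ord //.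
Qed.

Section Leib.
Variable A : algebra ar.
Variable F : A -> Prop.

Definition LI (a b : A) := forall p, poly p -> (F (p a) <-> F (p b)).

Lemma LI_cong : is_congruence LI.
Proof.
split.
- by move=> a p _.
- by move=> a b H p Hp; split => h; apply/(H p Hp).
- move=> a b c H1 H2 p Hp; split => h.
  + by apply/(H2 p Hp); apply/(H1 p Hp).
  + by apply/(H1 p Hp); apply/(H2 p Hp).
- apply: multi_compat.
  + by move=> a p _.
  + move=> a b c H1 H2 p Hp; split => h.
    * by apply/(H2 p Hp); apply/(H1 p Hp).
    * by apply/(H1 p Hp); apply/(H2 p Hp).
  + move=> f u i c d H p Hp.
    exact: (H (fun z => p (@op _ ar A f (upd_o u i z))) (poly_comp Hp (poly_step u i))).
Qed.

Lemma LI_compat : compatible LI F.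
Proof. by move=> a b H Fa; apply/(H (fun z => z) (poly_id a)). Qed.

Lemma Leibniz_LI a b : Leibniz F a b <-> LI a b.
Proof.
split.
- move=> [th [Hth Hc Hab]] p [phi [v Hp]]; rewrite !Hp.
  have H1 : th (eval (upd0 v a) phi) (eval (upd0 v b) phi).
    apply: (cong_eval Hth) => n; rewrite /upd0; case: (n == 0) => //.
    by case: Hth => r _ _ _; apply: r.
  case: Hth => _ s _ _.
  by split; [apply: Hc | apply: Hc; apply: s].
- by move=> H; exists LI; split => //; [apply: LI_cong | apply: LI_compat].
Qed.

Lemma Leibniz_cong : is_congruence (Leibniz F).
Proof.
have E : forall a b, Leibniz F a b = LI a b.
  by move=> a b; apply: propositional_extensionality; apply: Leibniz_LI.
have -> : Leibniz F = LI.
  by apply: functional_extensionality => a; apply: functional_extensionality => b.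
exact: LI_cong.
Qed.

Lemma Leibniz_compat : compatible (Leibniz F) F.
Proof. by move=> a b [th [_ Hc H]]; apply: Hc. Qed.

Lemma Leibniz_refl a : Leibniz F a a.
Proof. by case: Leibniz_cong => r _ _ _; apply: r. Qed.

End Leib.
End Gen.

Section Quot.
Variable Op : Type.
Variable ar : Op -> nat.

Lemma sig_eq (T : Type) (P : T -> Prop) (x y : {z | P z}) :
  proj1_sig x = proj1_sig y -> x = y.
Proof.
case: x => x px; case: y => y py /= E; subst y; f_equal; apply: proof_irrelevance.
Qed.

Variable A : algebra ar.
Variable F : A -> Prop.
Notation Om := (Leibniz F).

Lemma Om_sym a b : Om a b -> Om b a.
Proof. by case: (Leibniz_cong F) => _ s _ _; apply: s. Qed.

Lemma Om_eq a b : Om a b -> Om a = Om b.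
Proof.
case: (Leibniz_cong F) => r s t _ H.
apply: functional_extensionality => x; apply: propositional_extensionality; split => h.
- exact: (t _ _ _ (s _ _ H) h).
- exact: (t _ _ _ H h).
Qed.

Lemma qclass_eq a b : Om a b -> qclass Om a = qclass Om b.
Proof. by move=> H; apply: sig_eq => /=; apply: Om_eq. Qed.

Lemma qclass_inv a b : qclass Om a = qclass Om b -> Om a b.
Proof.
move=> E; have E' : Om a = Om b by exact: (f_equal (@proj1_sig _ _) E).
rewrite E'; exact: Leibniz_refl.
Qed.

Lemma qrep_spec (c : quot_carrier Om) : c = qclass Om (qrep c).
Proof.
apply: sig_eq => /=; rewrite /qrep.
exact: (proj2_sig (constructive_indefinite_description _ (proj2_sig c))).
Qed.

Lemma qrep_class a : Om (qrep (qclass Om a)) a.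
Proof. apply: Om_sym; apply: qclass_inv; exact: qrep_spec. Qed.

Lemma quot_op_class f (u : 'I_(ar f) -> A) :
  @op _ ar (quot_alg Om) f (fun i => qclass Om (u i)) = qclass Om (op u).
Proof.
rewrite /= /quot_op; apply: qclass_eq.
case: (Leibniz_cong F) => _ _ _ c; apply: c => i; apply: qrep_class.
Qed.

Lemma eval_quot (v : nat -> A) t :
  eval (A := quot_alg Om) (fun n => qclass Om (v n)) t = qclass Om (eval v t).
Proof.
elim: t => [n|f args IH] //=.
have -> : (fun i => eval (A := quot_alg Om) (fun n => qclass Om (v n)) (args i)) =
          (fun i => qclass Om (eval v (args i))).
  by apply: functional_extensionality => i; apply: IH.
exact: quot_op_class.
Qed.

Lemma eval_quot' (V : nat -> quot_alg Om) t :
  eval V t = qclass Om (eval (fun n => qrep (V n)) t).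
Proof.
rewrite -eval_quot; apply: eval_ext => n; exact: qrep_spec.
Qed.

Definition FQ (c : quot_alg Om) : Prop := F (qrep c).

Lemma FQ_class a : FQ (qclass Om a) <-> F a.
Proof.
rewrite /FQ; split => h.
- exact: (Leibniz_compat (qrep_class a) h).
- exact: (Leibniz_compat (Om_sym (qrep_class a)) h).
Qed.

Lemma quot_model (L : logic ar) : model L F -> model L FQ.
Proof.
move=> HM G phi HL V HG.
rewrite eval_quot' FQ_class; apply: (HM G phi HL) => g Hg.
by rewrite -FQ_class -eval_quot'; apply: HG.
Qed.

Lemma quot_reduced : reduced FQ.
Proof.
move=> c d [th' [[r s t o] Hc H]].
pose th a b := th' (qclass Om a) (qclass Om b).
have Hth : Leibniz F (qrep c) (qrep d).
  exists th; split.
  - split.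
    + by move=> a; apply: r.
    + by move=> a b; apply: s.
    + by move=> a b e; apply: t.
    + move=> f u w Huw; rewrite /th -!quot_op_class; apply: o => i; apply: Huw.
  - move=> a b Hab Fa; rewrite -FQ_class; apply: (Hc _ _ Hab); by rewrite FQ_class.
  - by rewrite /th -!qrep_spec.
by rewrite (qrep_spec c) (qrep_spec d); apply: qclass_eq.
Qed.

End Quot.

Section Sub.
Variable Op : Type.
Variable ar : Op -> nat.

Lemma eval_sub (A : algebra ar) (S : A -> Prop) (hS : op_closed S) (v : nat -> sub_alg hS) t :
  proj1_sig (eval v t) = eval (fun n => proj1_sig (v n)) t.
Proof.
elim: t => [n|f args IH] //=; f_equal; apply: functional_extensionality => i; apply: IH.
Qed.

Lemma sub_model (L : logic ar) (A : algebra ar) (F : A -> Prop) (S : A -> Prop) (hS : op_closed S) :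
  model L F -> model L (fun c : sub_alg hS => F (proj1_sig c)).
Proof.
move=> HM G phi HL v HG /=; rewrite eval_sub; apply: (HM G phi HL) => g Hg.
by rewrite -eval_sub; apply: HG.
Qed.

Definition gen (A : algebra ar) (w : nat -> A) : A -> Prop := fun a => exists t, a = eval w t.

Lemma gen_closed (A : algebra ar) (w : nat -> A) : op_closed (gen w).
Proof.
move=> f u Hu.
pose tt := fun i => proj1_sig (constructive_indefinite_description _ (Hu i)).
exists (App tt) => /=; f_equal; apply: functional_extensionality => i.
exact: (proj2_sig (constructive_indefinite_description _ (Hu i))).
Qed.

Definition ghat (A : algebra ar) (w : nat -> A) (n : nat) : sub_alg (@gen_closed A w) :=
  exist _ (w n) (ex_intro _ (Var ar n) erefl).

Lemma gen_choice (A : algebra ar) (w : nat -> A) (v : nat -> sub_alg (@gen_closed A w)) :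
  exists tv : nat -> term ar, forall n, proj1_sig (v n) = eval w (tv n).
Proof.
exists (fun n => proj1_sig (constructive_indefinite_description _ (proj2_sig (v n)))).
move=> n; exact: (proj2_sig (constructive_indefinite_description _ (proj2_sig (v n)))).
Qed.

Lemma cons_model (M : list (matrix ar)) m : List.In m M -> model (cons_of M) (@mfil _ _ m).
Proof. by move=> Hm G phi HL; apply: HL. Qed.

End Sub.

Section Main.
Variable Op : Type.
Variable ar : Op -> nat.
Variable M : list (matrix ar).
Notation L := (cons_of M).

Lemma c1_xx Delta (A : algebra ar) (F : A -> Prop) : cond1 L Delta -> model L F ->
  forall d x, Delta d -> F (eval (val2 x x) d).
Proof.
move=> [Hxy Hth _] HM d x Hd.
have := HM _ _ (Hth d Hd) (val2 x x) (fun g (H : False) => match H with end).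
by rewrite eval_subst (eval_xy (w := val2 x x) (Hxy d Hd)).
Qed.

Lemma c1_mp Delta (A : algebra ar) (F : A -> Prop) : cond1 L Delta -> model L F ->
  forall x y, F x -> (forall d, Delta d -> F (eval (val2 x y) d)) -> F y.
Proof.
move=> [_ _ HMP] HM x y Fx HD.
apply: (HM _ _ HMP (val2 x y)) => g [->|Hg] //; exact: HD.
Qed.

Lemma vars_True (t : term ar) : vars_in (fun _ => True) t.
Proof. by elim: t => [n|f args IH] /=. Qed.

Lemma cond2_char Delta : cond2 L Delta ->
  forall (A : algebra ar) (F : A -> Prop), model L F ->
  forall a b : A, Leibniz F a b <-> (forall d, Delta d -> F (eval (val2 a b) d)).
Proof.
move=> [H1 Hf] A F HM; have [Hxy _ _] := H1.
pose th c e := forall d, Delta d -> F (eval (val2 c e) d).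
have Hop : op_compat th.
  move=> f u w Huw d Hd.
  pose V n := match (insub (n./2) : option 'I_(ar f)) with
              | Some j => if odd n then w j else u j | None => op u end.
  have V0 : forall j : 'I_(ar f), V (2 * j) = u j.
    move=> j; rewrite /V.
    have -> : (2 * j)./2 = j by lia.
    by rewrite valK mul2n odd_double.
  have V1 : forall j : 'I_(ar f), V (2 * j + 1) = w j.
    move=> j; rewrite /V.
    have -> : (2 * j + 1)./2 = j by lia.
    by rewrite valK oddD mul2n odd_double.
  have := HM _ _ (Hf f d Hd) V.
  have E : eval (fun n => eval V (s_f ar f n)) d = eval (val2 (op u) (op w)) d.
    apply: (eval_xy (Hxy d Hd)); rewrite /val2 /=; f_equal; apply: functional_extensionality => i.
    - exact: V0.
    - exact: V1.
  rewrite eval_subst E; apply => g [i [d' [Hd' ->]]].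
  have E' : eval (fun n => eval V (s_i ar i n)) d' = eval (val2 (u i) (w i)) d'.
    by apply: (eval_xy (Hxy d' Hd')) => /=; [apply: V0 | apply: V1].
  by rewrite eval_subst E'; apply: Huw.
have Hr : forall c, th c c by move=> c d Hd; apply: (c1_xx H1 HM).
have Hmp : forall c e, th c e -> F c -> F e by move=> c e H Fc; apply: (c1_mp H1 HM Fc).
have Hs : forall c e, th c e -> th e c.
  move=> c e H d Hd; apply: (Hmp (eval (val2 c c) d)); last exact: Hr.
  by apply: (compat_eval Hop); case=> [|n] //=.
have Ht : forall c e g, th c e -> th e g -> th c g.
  move=> c e g H2 H3 d Hd; apply: (Hmp (eval (val2 e g) d)); last exact: H3.
  apply: (compat_eval Hop); case=> [|n] /=; [exact: (Hs _ _ H2) | exact: (Hr _)].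
have Hcong : is_congruence th by split.
move=> a b; split.
- move=> [th' [Hc Hcomp H]] d Hd.
  apply: (Hcomp (eval (val2 a a) d)); last exact: (c1_xx H1 HM).
  apply: (cong_eval Hc); case: Hc => r _ _ _; case=> [|n] //=.
- by move=> H; exists th; split.
Qed.

Lemma equiv_cond2 : equivalential L <-> exists Delta, cond2 L Delta.
Proof.
split.
- move=> [D [Hxy Hch]]; exists D; split; first split.
  + exact: Hxy.
  + move=> d Hd m Hm v _.
    rewrite eval_subst (eval_xy (w := val2 (v 0) (v 0)) (Hxy d Hd)) //.
    exact: ((Hch _ _ (cons_model Hm) (v 0) (v 0)).1 (Leibniz_refl _ _)).
  + move=> m Hm v Hv.
    have HL : Leibniz (@mfil _ _ m) (v 0) (v 1).
      apply/(Hch _ _ (cons_model Hm)) => d Hd.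
      rewrite -(eval_xy (v := v) (Hxy d Hd)) //; apply: Hv; by right.
    exact: (Leibniz_compat HL (Hv _ (or_introl erefl))).
  + move=> f prem d Hd m Hm v Hv.
    have Hi : forall i : 'I_(ar f), Leibniz (@mfil _ _ m) (v (2 * i)) (v (2 * i + 1)).
      move=> i; apply/(Hch _ _ (cons_model Hm)) => d' Hd'.
      have := Hv (subst (s_i ar i) d') (ex_intro _ i (ex_intro _ d' (conj Hd' erefl))).
      by rewrite eval_subst (eval_xy (w := val2 (v (2 * i)) (v (2 * i + 1))) (Hxy _ Hd')).
    have HL := (Leibniz_cong (@mfil _ _ m)).
    case: HL => _ _ _ Ho; have := Ho f _ _ Hi.
    move/(Hch _ _ (cons_model Hm)) => H.
    have := H d Hd.
    rewrite eval_subst (eval_xy (w := val2 (op (fun i : 'I_(ar f) => v (2 * i)))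
                                           (op (fun i : 'I_(ar f) => v (2 * i + 1)))) (Hxy _ Hd)) //.
- move=> [D HC]; exists D; split; first by case: HC => [[]].
  exact: cond2_char.
Qed.

Lemma equiv_proto : equivalential L -> protoalgebraic L.
Proof.
move=> [D [Hxy Hch]]; exists D => A F HM a b; rewrite Hch //; split.
- move=> H v H0 H1 d Hd; rewrite (eval_xy (w := val2 a b) (Hxy d Hd)) ?H0 ?H1 //; exact: H.
- by move=> H d Hd; apply: (H (val2 a b)).
Qed.

End Main.

Section Main2.
Variable Op : Type.
Variable ar : Op -> nat.
Variable M : list (matrix ar).
Notation L := (cons_of M).

Lemma proto_cond1 : protoalgebraic L <-> exists Delta, cond1 L Delta.
Proof.
split.
- move=> [D0 Hch].
  pose tf n := if n == 1 then Var ar 1 else Var ar 0.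
  have tf_xy : forall t, vars_in xy_var (subst tf t).
    move=> t; apply: (vars_subst (P := fun _ => True)); first exact: vars_True.
    by move=> n _; rewrite /tf; case: (n == 1) => /=; [right | left].
  pose D d := exists del (tau : nat -> term ar), [/\ D0 del, tau 0 = Var ar 0, tau 1 = Var ar 1,
                 (forall n, vars_in xy_var (tau n)) & d = subst tau del].
  exists D; split.
  + move=> d [del [tau [_ _ _ Ht ->]]].
    apply: (vars_subst (P := fun _ => True)); first exact: vars_True.
    by move=> n _; apply: Ht.
  + move=> d [del [tau [Hd H0 H1 _ ->]]] m Hm v _.
    rewrite eval_subst eval_subst.
    apply: ((Hch _ _ (cons_model Hm) (v 0) (v 0)).1 (Leibniz_refl _ _)) => //=.
    * by rewrite H0.
    * by rewrite H1.
  + move=> m Hm w Hw.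
    pose w' n := if n == 1 then w 1 else w 0.
    pose FB := fun c : sub_alg (@gen_closed _ _ _ w') => @mfil _ _ m (proj1_sig c).
    have HMB : model L FB := sub_model (cons_model Hm).
    have HL : Leibniz FB (ghat w' 0) (ghat w' 1).
      apply/(Hch _ _ HMB) => v Hv0 Hv1 del Hdel.
      have [tv Htv] := gen_choice v.
      pose tau n := if n == 0 then Var ar 0 else if n == 1 then Var ar 1 else subst tf (tv n).
      have Htau : forall n, vars_in xy_var (tau n).
        by case=> [|[|n]] /=; [left | right | apply: tf_xy].
      have := Hw (subst tau del) (or_intror (ex_intro _ del (ex_intro _ tau
                 (And5 Hdel erefl erefl Htau erefl)))).
      rewrite /FB eval_sub eval_subst.
      have -> : (fun n => eval w (tau n)) = (fun n => proj1_sig (v n)); last by [].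
      apply: functional_extensionality; case=> [|[|n]] /=.
      * by rewrite Hv0.
      * by rewrite Hv1.
      * rewrite Htv eval_subst; apply: eval_ext => k; rewrite /tf /w'.
        by case: (k == 1).
    have := Leibniz_compat HL; rewrite /FB /=; apply.
    exact: (Hw _ (or_introl erefl)).
- move=> [D HC]; have [Hxy Hth HMP] := HC.
  pose rho n := if n == 0 then Var ar 1 else Var ar n.
  pose sg (phi : term ar) n := if n == 0 then phi else if n == 1 then subst rho phi else Var ar n.
  pose D' d := exists del phi, D del /\ d = subst (sg phi) del.
  exists D' => A F HM a b; split.
  + move=> HL v Hv0 Hv1 d [del [phi [Hdel ->]]].
    pose p z := eval (upd0 v z) phi.
    rewrite eval_subst (eval_xy (w := val2 (p a) (p b)) (Hxy _ Hdel)); first last.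
    * rewrite /= eval_subst /p; apply: eval_ext => n; rewrite /upd0 /rho.
      by case: n => [|n] //=.
    * rewrite /= /p; apply: eval_ext => n; rewrite /upd0.
      by case: n => [|n] //=.
    have [th [Hc Hcomp Hab]] := HL.
    have Hr : forall x, th x x by case: Hc.
    apply: (Hcomp (eval (val2 (p a) (p a)) del)); last exact: (c1_xx HC HM).
    apply: (cong_eval Hc); case=> [|n] /=; first exact: Hr.
    apply: (cong_eval Hc); case=> [|k] /=; [exact: Hab | exact: Hr].
  + move=> H.
    pose th c e := forall p, poly p -> forall del, D del -> F (eval (val2 (p c) (p e)) del).
    have Hmp : forall c e, th c e -> forall p, poly p -> F (p c) -> F (p e).
      move=> c e H' p Hp Fc; apply: (c1_mp HC HM Fc) => d Hd; exact: H'.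
    have Hr : forall c, th c c by move=> c p _ del Hdel; apply: (c1_xx HC HM).
    have Hs : forall c e, th c e -> th e c.
      move=> c e H' p Hp del Hdel.
      have Hq := poly_comp (poly_d del (p c)) Hp.
      apply: (Hmp c e H' _ Hq) => /=; exact: (c1_xx HC HM).
    have Ht : forall c e g, th c e -> th e g -> th c g.
      move=> c e g H1 H2 p Hp del Hdel.
      have Hq := poly_comp (poly_d del (p g)) Hp.
      apply: (Hmp e c (Hs _ _ H1) _ Hq) => /=; exact: H2.
    have Hcong : is_congruence th.
      split => //; apply: multi_compat => //.
      move=> f u i c e H' p Hp; exact: (H' _ (poly_comp Hp (poly_step u i))).
    exists th; split => //.
    * move=> c e H' Fc; exact: (Hmp c e H' _ (poly_id c) Fc).
    * move=> p [phi [v Hp]] del Hdel.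
      pose sh n := if n == 0 then Var ar 0 else Var ar n.+1.
      pose V n := if n == 0 then a else if n == 1 then b else v n.-1.
      have := H V erefl erefl (subst (sg (subst sh phi)) del)
                (ex_intro _ del (ex_intro _ (subst sh phi) (conj Hdel erefl))).
      rewrite eval_subst (eval_xy (w := val2 (p a) (p b)) (Hxy _ Hdel)) //.
      - rewrite /val2 /= Hp !eval_subst; apply: eval_ext => n; rewrite /upd0.
        by case: n => [|n].
      - rewrite /val2 /= Hp !eval_subst; apply: eval_ext => n; rewrite /upd0.
        by case: n => [|n].
Qed.

Lemma TE_cond3 : truth_equational L -> exists tau, cond3 M tau.
Proof.
move=> [tau' [Hx HTE]]; exists tau'; split => // m Hm S hS b FB.
have HMB : model L FB := sub_model (cons_model Hm).
have := HTE _ _ (quot_model HMB) (@quot_reduced _ _ _ FB) (qclass _ b).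
by rewrite FQ_class.
Qed.

Lemma proto_cond3_TE : protoalgebraic L -> forall tau, cond3 M tau -> truth_equational L.
Proof.
move=> [D0 Hch] tau [Hx Hc3]; exists tau; split => // A F HM Hred a; split.
- move=> Fa [s t] Hst; have [Hs Ht] := Hx _ Hst; rewrite /= in Hs Ht *.
  apply: Hred; apply/(Hch _ _ HM) => v Hv0 Hv1 del Hdel.
  pose sg n := if n == 0 then s else if n == 1 then t else Var ar n.
  have D : forall m, List.In m M -> forall w : nat -> malg m,
             @mfil _ _ m (w 0) -> @mfil _ _ m (eval w (subst sg del)).
    move=> m Hm w Hw0.
    pose FB := fun c : sub_alg (@gen_closed _ _ _ w) => @mfil _ _ m (proj1_sig c).
    have HMB : model L FB := sub_model (cons_model Hm).
    have Hsat := (Hc3 m Hm _ (@gen_closed _ _ _ w) (ghat w 0)).1 Hw0.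
    have E := Hsat _ Hst; rewrite /= in E.
    rewrite (eval_quot FB (fun _ => ghat w 0) s) (eval_quot FB (fun _ => ghat w 0) t) in E.
    have HO := qclass_inv E.
    have := (Hch _ _ HMB _ _).1 HO
      (fun n => if n == 0 then eval (fun _ => ghat w 0) s
                else if n == 1 then eval (fun _ => ghat w 0) t else ghat w n) erefl erefl del Hdel.
    rewrite /FB eval_sub eval_subst.
    have -> : (fun n => eval w (sg n)) =
              (fun n => proj1_sig (if n == 0 then eval (fun _ => ghat w 0) s
                else if n == 1 then eval (fun _ => ghat w 0) t else ghat w n)); last by [].
    apply: functional_extensionality; case=> [|[|n]] /=.
    + rewrite eval_sub; apply: (eval_vars Hs) => n /= -> //.
    + rewrite eval_sub; apply: (eval_vars Ht) => n /= -> //.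
    + by [].
  have := HM (fun g => g = Var ar 0) (subst sg del)
             (fun m Hm w Hw => D m Hm w (Hw _ erefl)) (upd0 v a).
  rewrite eval_subst.
  have -> : (fun n => eval (upd0 v a) (sg n)) = v; last first.
    by apply => g ->.
  apply: functional_extensionality; case=> [|[|n]] /=.
  + by rewrite Hv0; apply: (eval_vars Hs) => n /= ->.
  + by rewrite Hv1; apply: (eval_vars Ht) => n /= ->.
  + by [].
- move=> Hsat.
  pose G g := exists del s t (sg : nat -> term ar),
                [/\ D0 del, tau (s, t), sg 0 = s, sg 1 = t & g = subst sg del].
  have D : L G (Var ar 0).
    move=> m Hm w Hw /=.
    pose FB := fun c : sub_alg (@gen_closed _ _ _ w) => @mfil _ _ m (proj1_sig c).
    have HMB : model L FB := sub_model (cons_model Hm).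
    apply: ((Hc3 m Hm _ (@gen_closed _ _ _ w) (ghat w 0)).2) => [[s t]] Hst /=.
    have [Hs Ht] := Hx _ Hst; rewrite /= in Hs Ht.
    rewrite (eval_quot FB (fun _ => ghat w 0) s) (eval_quot FB (fun _ => ghat w 0) t).
    apply: qclass_eq; apply/(Hch _ _ HMB) => v Hv0 Hv1 del Hdel.
    have [tv Htv] := gen_choice v.
    pose sg n := if n == 0 then s else if n == 1 then t else tv n.
    have := Hw (subst sg del) (ex_intro _ del (ex_intro _ s (ex_intro _ t (ex_intro _ sg
               (And5 Hdel Hst erefl erefl erefl))))).
    rewrite /FB eval_sub eval_subst.
    have -> : (fun n => eval w (sg n)) = (fun n => proj1_sig (v n)); last by [].
    apply: functional_extensionality; case=> [|[|n]] /=.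
    + rewrite Hv0 eval_sub; apply: (eval_vars Hs) => n /= -> //.
    + rewrite Hv1 eval_sub; apply: (eval_vars Ht) => n /= -> //.
    + by rewrite Htv.
  apply: (HM G (Var ar 0) D (fun _ => a)) => g [del [s [t [sg [Hdel Hst H0 H1 ->]]]]].
  rewrite eval_subst.
  apply: ((Hch _ _ HM (eval (fun _ => a) s) (eval (fun _ => a) s)).1 (Leibniz_refl _ _)) => //=.
  + by rewrite H0.
  + by rewrite H1; exact: (esym (Hsat _ Hst)).
Qed.

End Main2.

Unset Implicit Arguments.

Theorem theorem2p1 (Op : Type) (ar : Op -> nat) (M : list (matrix ar))
  (hM : forall m, List.In m M -> finite_type (malg m)) :
  let L := cons_of M in
  (* (1) *)
  (protoalgebraic L <-> exists Delta, cond1 L Delta) /\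
  (* (2) *)
  ((equivalential L <-> exists Delta, cond2 L Delta) /\
   forall Delta, cond2 L Delta ->
   forall (A : algebra ar) (F : A -> Prop), model L F ->
   forall a b : A, Leibniz F a b <-> (forall d, Delta d -> F (eval (val2 a b) d))) /\
  (* (3) *)
  (weakly_algebraizable L <-> protoalgebraic L /\ exists tau, cond3 M tau) /\
  (algebraizable L <-> equivalential L /\ exists tau, cond3 M tau).
Proof.
move=> L; split; first exact: proto_cond1.
split; first by split; [exact: equiv_cond2 | exact: cond2_char].
split.
- split.
  + by move=> [P T]; split => //; apply: TE_cond3.
  + by move=> [P [tau C]]; split => //; apply: (proto_cond3_TE P C).
- split.
  + by move=> [E T]; split => //; apply: TE_cond3.
  + by move=> [E [tau C]]; split => //; apply: (proto_cond3_TE (equiv_proto E) C).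
Qed.
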